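(* Let $n\ge1$, $0<\epsilon\le1$, $0\le\tau<1$, and let $G=(V,E)$ be a comparison graph with $|E|\ge1$. Let $P$ be a distribution on $[n]$ with $\|P-U_n\|\ge\epsilon$ and $|E|(\mu_P-\mu_P^2)< c(G)(\gamma_P-\mu_P^2)$. If $c(G)\le \dfrac{|E|^2(1-\tau)^2\epsilon^2}{16\sqrt n}$, then the collision-based algorithm $(G,\tau)$ outputs YES on $P$ with probability at most $1/4$.
   Context: $U_n$ is the uniform distribution on $[n]$; $\|P-Q\|=\sum_i|P_i-Q_i|$. $\mu_P=\sum_iP_i^2$, $\gamma_P=\sum_iP_i^3$. A comparison graph is a finite simple undirected graph $G=(V,E)$; $c(G)$ is the number of ordered triples $(u,v,w)$ of distinct vertices with $\{u,v\},\{v,w\}\in E$. Given $P$, each vertex $v$ receives an independent sample $S(v)\sim P$; for $e=\{u,v\}\in E$, $\mathbf 1_e=\mathbf 1[S(u)=S(v)]$; $Z=\sum_{e\in E}\mathbf 1_e$ and $T=|E|\frac{1+\tau\epsilon^2}{n}$; the algorithm $(G,\tau)$ outputs YES if $Z<T$ and NO otherwise. *)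

(* Defs.v *)
From mathcomp Require Import all_boot all_order all_algebra.
From mathcomp Require Import reals.
Set Implicit Arguments. Unset Strict Implicit. Unset Printing Implicit Defensive.
Import Order.TTheory GRing.Theory Num.Theory.
Local Open Scope ring_scope.

Section Defs.
Variable R : realType.

Definition simple_graph (V : finType) (e : rel V) : Prop :=
  irreflexive e /\ symmetric e.

Definition edges (V : finType) (e : rel V) : {set {set V}} :=
  [set A : {set V} | [exists u, exists v, e u v && (A == [set u; v])]].

Definition cG (V : finType) (e : rel V) : nat :=
  #|[set t : V * V * V | [&& t.1.1 != t.1.2, t.1.2 != t.2, t.1.1 != t.2,
                             e t.1.1 t.1.2 & e t.1.2 t.2]]|.

Definition is_distr (n : nat) (P : {ffun 'I_n -> R}) : Prop :=
  (forall i, 0 <= P i) /\ \sum_i P i = 1.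

Definition dist_unif (n : nat) (P : {ffun 'I_n -> R}) : R :=
  \sum_i `|P i - n%:R^-1|.

Definition muP (n : nat) (P : {ffun 'I_n -> R}) : R := \sum_i P i ^+ 2.
Definition gammaP (n : nat) (P : {ffun 'I_n -> R}) : R := \sum_i P i ^+ 3.

Definition collisions (V : finType) (e : rel V) (n : nat)
  (S : {ffun V -> 'I_n}) : nat :=
  #|[set A in edges e | [forall u in A, forall v in A, S u == S v]]|.

Definition threshold (V : finType) (e : rel V) (n : nat) (tau eps : R) : R :=
  #|edges e|%:R * (1 + tau * eps ^+ 2) / n%:R.

(* probability that the algorithm (G,tau) outputs YES (Z < T), where the
   samples S(v) are independent and P-distributed: product measure on
   assignments S : V -> [n]. *)
Definition prob_yes (V : finType) (e : rel V) (n : nat)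
  (P : {ffun 'I_n -> R}) (tau eps : R) : R :=
  \sum_(S : {ffun V -> 'I_n} | (collisions e S)%:R < threshold e n tau eps)
     \prod_v P (S v).

End Defs.

(* Main.v *)
Require Import Defs.
From mathcomp Require Import all_boot all_order all_algebra.
From mathcomp Require Import reals ring lra.
Import Order.TTheory GRing.Theory Num.Theory.
Local Open Scope ring_scope.
Set Implicit Arguments. Unset Strict Implicit. Unset Printing Implicit Defensive.

Section Prob.
Variables (R : realType) (V : finType) (n : nat) (P : {ffun 'I_n -> R}).
Hypothesis HP1 : \sum_i P i = 1.

Definition W (S : {ffun V -> 'I_n}) : R := \prod_v P (S v).
Definition Ex (F : {ffun V -> 'I_n} -> R) : R := \sum_S W S * F S.

Lemma Ex_ext F G : (forall S, F S = G S) -> Ex F = Ex G.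
Proof. by move=> h; rewrite /Ex; apply: eq_bigr => S _; rewrite h. Qed.

Lemma Ex_prod (g : V -> 'I_n -> R) :
  Ex (fun S => \prod_v g v (S v)) = \prod_v \sum_i P i * g v i.
Proof. by rewrite bigA_distr_bigA /Ex; apply: eq_bigr => S _; rewrite /W -big_split. Qed.

Lemma Ex_seq (g : V -> 'I_n -> R) (s : seq V) : uniq s ->
  Ex (fun S => \prod_(z <- s) g z (S z)) = \prod_(z <- s) \sum_i P i * g z i.
Proof.
move=> us.
have H : forall F : V -> R, \prod_(z <- s) F z = \prod_z (if z \in s then F z else 1).
  by move=> F; rewrite big_uniq // big_mkcond.
rewrite H; set f := (fun z i => if z \in s then g z i else 1).
transitivity (Ex (fun S => \prod_v f v (S v))).
  by apply: Ex_ext => S; rewrite H.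
rewrite (Ex_prod f); apply: eq_bigr => z _; rewrite /f.
by case: (z \in s) => //; under eq_bigr do rewrite mulr1.
Qed.

Lemma sumW : \sum_S W S = 1.
Proof.
rewrite /W -(bigA_distr_bigA (fun (v : V) (i : 'I_n) => P i)).
by rewrite big1 // => v _.
Qed.

Lemma Ex_const c : Ex (fun _ => c) = c.
Proof. by rewrite /Ex -mulr_suml sumW mul1r. Qed.

Lemma Ex_add F G : Ex (fun S => F S + G S) = Ex F + Ex G.
Proof. by rewrite /Ex -big_split; apply: eq_bigr => S _; rewrite mulrDr. Qed.

Lemma Ex_scale c F : Ex (fun S => c * F S) = c * Ex F.
Proof. by rewrite /Ex mulr_sumr; apply: eq_bigr => S _; rewrite mulrCA. Qed.

Lemma Ex_sum (I : finType) (F : I -> {ffun V -> 'I_n} -> R) :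
  Ex (fun S => \sum_j F j S) = \sum_j Ex (F j).
Proof.
rewrite /Ex; under eq_bigr do rewrite mulr_sumr.
by rewrite exchange_big.
Qed.

Lemma ind_sum (T : finType) (a : T) (F : T -> R) :
  \sum_k (a == k)%:R * F k = F a.
Proof.
rewrite (bigD1 a) //= eqxx mul1r big1 ?addr0 // => k ka.
by rewrite eq_sym (negbTE ka) mul0r.
Qed.

Lemma P_ind (k : 'I_n) : \sum_i P i * (i == k)%:R = P k.
Proof. by under eq_bigr do rewrite mulrC eq_sym; rewrite ind_sum. Qed.

Lemma Ex_pair u v : u != v -> Ex (fun S => (S u == S v)%:R) = muP P.
Proof.
move=> uv.
rewrite (Ex_ext (G := fun S => \sum_k \prod_(z <- [:: u; v]) (fun z i => (i == k)%:R : R) z (S z))).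
  rewrite Ex_sum /muP; apply: eq_bigr => k _.
  by rewrite (Ex_seq (fun z i => (i == k)%:R)) /= ?inE ?uv // !big_cons big_nil !P_ind mulr1 expr2.
move=> S /=; under eq_bigr do rewrite !big_cons big_nil mulr1.
by rewrite ind_sum eq_sym.
Qed.

Lemma Ex_triple a b c : uniq [:: a; b; c] ->
  Ex (fun S => (S a == S b)%:R * (S a == S c)%:R) = gammaP P.
Proof.
move=> u.
rewrite (Ex_ext (G := fun S => \sum_k \prod_(z <- [:: a; b; c]) (fun z i => (i == k)%:R : R) z (S z))).
  rewrite Ex_sum /gammaP; apply: eq_bigr => k _.
  rewrite (Ex_seq (fun z i => (i == k)%:R)) // !big_cons big_nil !P_ind mulr1.
  by rewrite !exprS expr0 mulr1.
move=> S /=; under eq_bigr do rewrite !big_cons big_nil mulr1.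
by rewrite ind_sum !(eq_sym (S a)).
Qed.

Lemma Ex_quad u v x y : uniq [:: u; v; x; y] ->
  Ex (fun S => (S u == S v)%:R * (S x == S y)%:R) = muP P ^+ 2.
Proof.
move=> un.
have := un; rewrite /= !inE !negb_or => /and4P[/and3P[uv ux uy] /andP[vx vy] xy _].
rewrite (Ex_ext (G := fun S => \sum_k \sum_l \prod_(z <- [:: u; v; x; y])
   (fun z i => (i == if (z == u) || (z == v) then k else l)%:R : R) z (S z))).
  rewrite Ex_sum /muP expr2 mulr_suml; apply: eq_bigr => k _.
  rewrite Ex_sum mulr_sumr; apply: eq_bigr => l _.
  rewrite (Ex_seq (fun z i => (i == if (z == u) || (z == v) then k else l)%:R)) // !big_cons big_nil /= !eqxx /= orbT.
  rewrite (eq_sym x u) (eq_sym x v) (eq_sym y u) (eq_sym y v).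
  by rewrite (negbTE ux) (negbTE vx) (negbTE uy) (negbTE vy) /= !P_ind mulr1 !expr2 !mulrA.
move=> S /=; under eq_bigr do under eq_bigr do rewrite !big_cons big_nil mulr1 /=.
rewrite !eqxx /= orbT (eq_sym x u) (eq_sym x v) (eq_sym y u) (eq_sym y v).
rewrite (negbTE ux) (negbTE vx) (negbTE uy) (negbTE vy) /=.
under eq_bigr do under eq_bigr do rewrite mulrA.
under eq_bigr do rewrite -mulr_sumr.
under eq_bigr do rewrite ind_sum -mulrA.
by rewrite ind_sum !(eq_sym (S v)) (eq_sym (S y)).
Qed.


Definition q u v x y := Ex (fun S => (S u == S v)%:R * (S x == S y)%:R).

Ltac simpl_eqs := repeat match goal with
 | H : is_true (?a != ?b) |- context [?a == ?b] => rewrite (negbTE H)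
 | H : is_true (?a != ?b) |- context [?b == ?a] => rewrite (eq_sym b a) (negbTE H)
 end; rewrite ?eqxx /=.

Lemma bb (b : bool) : (b%:R * b%:R : R) = b%:R. Proof. by case: b; rewrite ?mulr1 ?mulr0. Qed.

Lemma q_formula u v x y : u != v -> x != y ->
  q u v x y - muP P ^+ 2 =
  (muP P - muP P ^+ 2) * ((x == u)%:R * (y == v)%:R + (x == v)%:R * (y == u)%:R)
  + (gammaP P - muP P ^+ 2) * ((x == u)%:R * (y != v)%:R + (x == v)%:R * (y != u)%:R
                              + (y == u)%:R * (x != v)%:R + (y == v)%:R * (x != u)%:R).
Proof.
move=> uv xy; rewrite /q.
case: (eqVneq x u) => [Exu|xu].
  subst x; case: (eqVneq y v) => [Eyv|yv].
    subst y; rewrite (Ex_ext (G := fun S => (S u == S v)%:R)); last by move=> S; rewrite bb.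
    rewrite Ex_pair //; simpl_eqs; ring.
  rewrite Ex_triple; last by rewrite /= !inE negb_or uv xy /= eq_sym yv.
  simpl_eqs; ring.
case: (eqVneq x v) => [Exv|xv].
  subst x; case: (eqVneq y u) => [Eyu|yu].
    subst y; rewrite (Ex_ext (G := fun S => (S u == S v)%:R)); last by move=> S; rewrite (eq_sym (S v)) bb.
    rewrite Ex_pair //; simpl_eqs; ring.
  rewrite (Ex_ext (G := fun S => (S v == S u)%:R * (S v == S y)%:R)); last by move=> S; rewrite (eq_sym (S u)).
  rewrite Ex_triple; last by rewrite /= !inE negb_or eq_sym uv xy /= eq_sym yu.
  simpl_eqs; ring.
case: (eqVneq y u) => [Eyu|yu].
  subst y.
  rewrite (Ex_ext (G := fun S => (S u == S v)%:R * (S u == S x)%:R)); last by move=> S; rewrite (eq_sym (S x)).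
  rewrite Ex_triple; last by rewrite /= !inE negb_or uv eq_sym xu /= eq_sym xv.
  simpl_eqs; ring.
case: (eqVneq y v) => [Eyv|yv].
  subst y.
  rewrite (Ex_ext (G := fun S => (S v == S u)%:R * (S v == S x)%:R)); last by move=> S; rewrite !(eq_sym _ (S v)).
  rewrite Ex_triple; last by rewrite /= !inE negb_or eq_sym uv eq_sym xv /= eq_sym xu.
  simpl_eqs; ring.
rewrite Ex_quad; last by rewrite /= !inE !negb_or uv !(eq_sym u) xu yu !(eq_sym v) xv yv xy.
simpl_eqs; ring.
Qed.

End Prob.

Section Graph.
Variables (V : finType) (e : rel V).
Hypothesis Hirr : irreflexive e.
Hypothesis Hsym : symmetric e.

Lemma e_neq u v : e u v -> u != v.
Proof. by move=> h; apply/eqP => uv; subst; rewrite Hirr in h. Qed.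

Lemma set2_eq (u v a b : V) : u != v ->
  ([set u; v] == [set a; b]) = ((u, v) == (a, b)) || ((u, v) == (b, a)).
Proof.
move=> uv; apply/idP/idP.
  move/eqP=> H.
  have hu : u \in [set a; b] by rewrite -H set21.
  have hv : v \in [set a; b] by rewrite -H set22.
  rewrite !in_set2 in hu hv.
  by move: hu hv uv => /orP[/eqP->|/eqP->] /orP[/eqP->|/eqP->]; rewrite ?eqxx ?orbT.
by case/orP => /eqP [-> ->] //; rewrite setUC.
Qed.

Lemma card_pairs (Q : {set V} -> bool) :
  (#|[set A in edges e | Q A]| * 2)%N =
  #|[set p : V * V | e p.1 p.2 && Q [set p.1; p.2]]|.
Proof.
symmetry; rewrite -sum1_card (partition_big (fun p : V * V => [set p.1; p.2])
   (fun A => A \in [set A in edges e | Q A])).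
  rewrite -sum_nat_const; apply: eq_bigr => A.
  rewrite inE => /andP[]; rewrite inE => /existsP[a /existsP[b /andP[eab /eqP EA]]] QA.
  subst A.
  rewrite sum1_card.
  have H2 : #|[set (a, b); (b, a)]| = 2%N.
    rewrite cards2; case: eqP => // - [ab _]; move: (e_neq eab); by rewrite ab eqxx.
  rewrite -H2.
  apply: eq_card => [[u v]]; rewrite unfold_in /= !inE /=.
  apply/idP/idP.
    case/andP => /andP[euv _]; rewrite set2_eq ?e_neq //.
  case/orP => /eqP [-> ->]; rewrite ?eqxx ?QA ?eab ?andbT //.
  by rewrite Hsym eab setUC QA eqxx.
move=> [u v]; rewrite !inE /= => /andP[euv Qp]; rewrite Qp andbT.
by apply/existsP; exists u; apply/existsP; exists v; rewrite euv eqxx.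
Qed.

End Graph.

Section GraphR.
Variables (R : realType) (V : finType) (e : rel V) (n : nat).
Hypothesis Hirr : irreflexive e.
Hypothesis Hsym : symmetric e.

Definition ee u v : R := (e u v)%:R.

Lemma card_rel (f : V -> V -> bool) :
  (#|[set p : V * V | f p.1 p.2]|)%:R = \sum_u \sum_v ((f u v)%:R : R).
Proof.
rewrite (pair_bigA _ (fun u v => ((f u v)%:R : R))) -sum1_card natr_sum big_mkcond.
by apply: eq_bigr => -[u v] _; rewrite inE /=; case: (f u v).
Qed.

Lemma edges_N : (#|edges e|%:R * 2 : R) = \sum_u \sum_v ee u v.
Proof.
have := card_pairs Hirr Hsym (fun _ => true).
have -> : [set A in edges e | true] = edges e by apply/setP => A; rewrite inE andbT.
move/(congr1 (fun m => (m%:R : R))); rewrite natrM => ->.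
rewrite (card_rel (fun u v => e u v && true)); apply: eq_bigr => u _; apply: eq_bigr => v _.
by rewrite andbT.
Qed.

Lemma coll_Y (S : {ffun V -> 'I_n}) :
  ((collisions e S)%:R * 2 : R) = \sum_u \sum_v ee u v * (S u == S v)%:R.
Proof.
have := card_pairs Hirr Hsym (fun A => [forall u in A, forall v in A, S u == S v]).
rewrite /collisions.
move/(congr1 (fun m => (m%:R : R))); rewrite natrM => ->.
rewrite (card_rel (fun u v => e u v && [forall x in [set u; v], forall y in [set u; v], S x == S y])).
apply: eq_bigr => u _; apply: eq_bigr => v _.
rewrite /ee -natrM mulnb; congr ((e u v && _)%:R).
apply/idP/idP.
  move/forall_inP/(_ u (set21 _ _))/forall_inP/(_ v (set22 _ _)); exact.
move/eqP=> h; apply/forall_inP => x; rewrite in_set2 => /orP[]/eqP->;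
  apply/forall_inP => y; rewrite in_set2 => /orP[]/eqP->; by rewrite ?h.
Qed.

Lemma cG_C3 : ((cG e)%:R : R) = \sum_a \sum_b \sum_c ee a b * ee b c * (a != c)%:R.
Proof.
rewrite (pair_bigA _ (fun a b => \sum_c ee a b * ee b c * (a != c)%:R)).
rewrite (pair_bigA _ (fun ab c => ee ab.1 ab.2 * ee ab.2 c * (ab.1 != c)%:R)).
rewrite /cG -sum1_card natr_sum big_mkcond.
apply: eq_bigr => -[[a b] c] _; rewrite inE /= /ee.
case Eab: (e a b); case Ebc: (e b c); rewrite ?andbF ?mulr0 ?mul0r //=.
rewrite (e_neq Hirr Eab) (e_neq Hirr Ebc) /=.
by case: (a != c); rewrite /= ?mulr1n ?mulr0n ?mulr1 ?mulr0.
Qed.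

End GraphR.


Section Var.
Variables (R : realType) (V : finType) (e : rel V) (n : nat) (P : {ffun 'I_n -> R}).
Hypothesis HP1 : \sum_i P i = 1.
Hypothesis Hirr : irreflexive e.
Hypothesis Hsym : symmetric e.

Local Notation ee := (@ee R V e).
Definition Y (S : {ffun V -> 'I_n}) : R := \sum_u \sum_v ee u v * (S u == S v)%:R.
Definition NN : R := \sum_u \sum_v ee u v.
Definition C3 : R := \sum_a \sum_b \sum_c ee a b * ee b c * (a != c)%:R.
Definition S4 (h : V -> V -> V -> V -> R) : R := \sum_u \sum_v \sum_x \sum_y h u v x y.

Lemma S4D h1 h2 : S4 (fun u v x y => h1 u v x y + h2 u v x y) = S4 h1 + S4 h2.
Proof.
rewrite /S4 -big_split; apply: eq_bigr => u _; rewrite -big_split; apply: eq_bigr => v _.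
rewrite -big_split; apply: eq_bigr => x _; by rewrite -big_split.
Qed.

Lemma S4Z c h : S4 (fun u v x y => c * h u v x y) = c * S4 h.
Proof.
rewrite /S4 mulr_sumr; apply: eq_bigr => u _; rewrite mulr_sumr; apply: eq_bigr => v _.
rewrite mulr_sumr; apply: eq_bigr => x _; by rewrite mulr_sumr.
Qed.

Lemma S4_ext h1 h2 : (forall u v x y, h1 u v x y = h2 u v x y) -> S4 h1 = S4 h2.
Proof.
move=> h; apply: eq_bigr => u _; apply: eq_bigr => v _; apply: eq_bigr => x _.
by apply: eq_bigr => y _.
Qed.

Lemma sum_only (T : finType) (a : T) (F : T -> R) :
  (forall x, x != a -> F x = 0) -> \sum_x F x = F a.
Proof. by move=> h; rewrite (bigD1 a) //= big1 ?addr0 // => x /h. Qed.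

Lemma eeb u v : ee u v * ee u v = ee u v.
Proof. by rewrite /ee; case: (e u v); rewrite ?mulr1 ?mulr0. Qed.

Lemma ee_sym u v : ee u v = ee v u.
Proof. by rewrite /ee Hsym. Qed.

Lemma EY : Ex P Y = NN * muP P.
Proof.
rewrite /Y /NN Ex_sum mulr_suml; apply: eq_bigr => u _.
rewrite Ex_sum mulr_suml; apply: eq_bigr => v _.
rewrite Ex_scale; case E: (e u v); last by rewrite /ee E !mul0r.
by rewrite Ex_pair // (e_neq Hirr E).
Qed.

Lemma EY2 : Ex P (fun S => Y S ^+ 2) = S4 (fun u v x y => ee u v * ee x y * q P u v x y).
Proof.
rewrite (Ex_ext P (G := fun S => \sum_u \sum_v \sum_x \sum_y
   (ee u v * ee x y) * ((S u == S v)%:R * (S x == S y)%:R))).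
  rewrite Ex_sum; apply: eq_bigr => u _; rewrite Ex_sum; apply: eq_bigr => v _.
  rewrite Ex_sum; apply: eq_bigr => x _; rewrite Ex_sum; apply: eq_bigr => y _.
  by rewrite Ex_scale.
move=> S; rewrite /Y expr2 mulr_suml; apply: eq_bigr => u _.
rewrite mulr_suml; apply: eq_bigr => v _; rewrite mulr_sumr; apply: eq_bigr => x _.
rewrite mulr_sumr; apply: eq_bigr => y _; ring.
Qed.

Lemma NN2 : (NN * muP P) ^+ 2 = S4 (fun u v x y => ee u v * ee x y * muP P ^+ 2).
Proof.
rewrite exprMn expr2 /NN mulr_suml mulr_suml; apply: eq_bigr => u _.
rewrite mulr_suml mulr_suml; apply: eq_bigr => v _.
rewrite mulr_sumr mulr_suml; apply: eq_bigr => x _.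
rewrite mulr_sumr mulr_suml; apply: eq_bigr => y _; ring.
Qed.

End Var.

Section Var2.
Variables (R : realType) (V : finType) (e : rel V) (n : nat) (P : {ffun 'I_n -> R}).
Hypothesis HP1 : \sum_i P i = 1.
Hypothesis Hirr : irreflexive e.
Hypothesis Hsym : symmetric e.

Local Notation ee := (@ee R V e).
Local Notation S4 := (@S4 R V).

Lemma S4B h1 h2 : S4 h1 - S4 h2 = S4 (fun u v x y => h1 u v x y - h2 u v x y).
Proof.
rewrite /S4 -sumrB; apply: eq_bigr => u _; rewrite -sumrB; apply: eq_bigr => v _.
rewrite -sumrB; apply: eq_bigr => x _; by rewrite -sumrB.
Qed.

Lemma bT : (true%:R : R) = 1. Proof. by []. Qed.
Lemma bF : (false%:R : R) = 0. Proof. by []. Qed.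

Lemma t1 : S4 (fun u v x y => ee u v * ee x y * ((x == u)%:R * (y == v)%:R)) = @NN R V e.
Proof.
apply: eq_bigr => u _; apply: eq_bigr => v _.
rewrite (@sum_only _ _ u); last first.
  by move=> x xu; apply: big1 => y _; rewrite (negbTE xu) mul0r mulr0.
rewrite (@sum_only _ _ v); last first.
  by move=> y yv; rewrite (negbTE yv) mulr0 mulr0.
by rewrite !eqxx bT mul1r mulr1 eeb.
Qed.

Lemma t2 : S4 (fun u v x y => ee u v * ee x y * ((x == v)%:R * (y == u)%:R)) = @NN R V e.
Proof.
apply: eq_bigr => u _; apply: eq_bigr => v _.
rewrite (@sum_only _ _ v); last first.
  by move=> x xu; apply: big1 => y _; rewrite (negbTE xu) mul0r mulr0.
rewrite (@sum_only _ _ u); last first.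
  by move=> y yv; rewrite (negbTE yv) mulr0 mulr0.
by rewrite !eqxx bT mul1r mulr1 (ee_sym R Hsym v u) eeb.
Qed.

Lemma g1 : S4 (fun u v x y => ee u v * ee x y * ((x == u)%:R * (y != v)%:R)) = @C3 R V e.
Proof.
transitivity (\sum_u \sum_v \sum_y ee u v * ee u y * (y != v)%:R).
  apply: eq_bigr => u _; apply: eq_bigr => v _.
  rewrite (@sum_only _ _ u); last first.
    by move=> x xu; apply: big1 => y _; rewrite (negbTE xu) mul0r mulr0.
  by apply: eq_bigr => y _; rewrite eqxx bT mul1r.
rewrite exchange_big /C3; apply: eq_bigr => v _; apply: eq_bigr => u _; apply: eq_bigr => y _.
by rewrite (ee_sym R Hsym u v) (eq_sym y v).
Qed.

Lemma g2 : S4 (fun u v x y => ee u v * ee x y * ((x == v)%:R * (y != u)%:R)) = @C3 R V e.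
Proof.
transitivity (\sum_u \sum_v \sum_y ee u v * ee v y * (y != u)%:R).
  apply: eq_bigr => u _; apply: eq_bigr => v _.
  rewrite (@sum_only _ _ v); last first.
    by move=> x xu; apply: big1 => y _; rewrite (negbTE xu) mul0r mulr0.
  by apply: eq_bigr => y _; rewrite eqxx bT mul1r.
rewrite /C3; apply: eq_bigr => u _; apply: eq_bigr => v _; apply: eq_bigr => y _.
by rewrite (eq_sym y u).
Qed.

Lemma g3 : S4 (fun u v x y => ee u v * ee x y * ((y == u)%:R * (x != v)%:R)) = @C3 R V e.
Proof.
transitivity (\sum_u \sum_v \sum_x ee u v * ee x u * (x != v)%:R).
  apply: eq_bigr => u _; apply: eq_bigr => v _; apply: eq_bigr => x _.
  rewrite (@sum_only _ _ u); last first.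
    by move=> y yu; rewrite (negbTE yu) mul0r mulr0.
  by rewrite eqxx bT mul1r.
under eq_bigr do rewrite exchange_big.
rewrite exchange_big /C3; apply: eq_bigr => x _; apply: eq_bigr => u _; apply: eq_bigr => v _.
by rewrite [ee u v * _]mulrC.
Qed.

Lemma g4 : S4 (fun u v x y => ee u v * ee x y * ((y == v)%:R * (x != u)%:R)) = @C3 R V e.
Proof.
transitivity (\sum_u \sum_v \sum_x ee u v * ee x v * (x != u)%:R).
  apply: eq_bigr => u _; apply: eq_bigr => v _; apply: eq_bigr => x _.
  rewrite (@sum_only _ _ v); last first.
    by move=> y yu; rewrite (negbTE yu) mul0r mulr0.
  by rewrite eqxx bT mul1r.
rewrite /C3; apply: eq_bigr => u _; apply: eq_bigr => v _; apply: eq_bigr => x _.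
by rewrite (ee_sym R Hsym x v) (eq_sym x u).
Qed.

Lemma Var_Y : Ex P (fun S => Y R e S ^+ 2) - (NN R e * muP P) ^+ 2 =
  2 * NN R e * (muP P - muP P ^+ 2) + 4 * @C3 R V e * (gammaP P - muP P ^+ 2).
Proof.
rewrite (EY2 e P) (NN2 e P) S4B.
set a := muP P - muP P ^+ 2; set b := gammaP P - muP P ^+ 2.
rewrite (S4_ext (h2 := fun u v x y =>
   a * (ee u v * ee x y * ((x == u)%:R * (y == v)%:R)) +
   a * (ee u v * ee x y * ((x == v)%:R * (y == u)%:R)) +
   (b * (ee u v * ee x y * ((x == u)%:R * (y != v)%:R)) +
    b * (ee u v * ee x y * ((x == v)%:R * (y != u)%:R)) +
    b * (ee u v * ee x y * ((y == u)%:R * (x != v)%:R)) +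
    b * (ee u v * ee x y * ((y == v)%:R * (x != u)%:R))))).
  rewrite !S4D !S4Z t1 t2 g1 g2 g3 g4; ring.
move=> u v x y; rewrite -mulrBr /ee.
case E1: (e u v); case E2: (e x y); rewrite ?bT ?bF; try ring.
rewrite q_formula // ?(e_neq Hirr E1) ?(e_neq Hirr E2) // -/a -/b; ring.
Qed.

End Var2.

Section Moments.
Variables (R : realType) (n : nat) (P : {ffun 'I_n -> R}).
Hypothesis n0 : (0 < n)%N.
Hypothesis HP0 : forall i, 0 <= P i.
Hypothesis HP1 : \sum_i P i = 1.

Let ni : R := n%:R^-1.
Let d i := P i - ni.
Let del := \sum_i d i ^+ 2.

Lemma nr_pos : (0 : R) < n%:R.
Proof. by rewrite ltr0n. Qed.

Lemma nini : n%:R * ni = 1.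
Proof. by rewrite /ni mulfV // gt_eqF // nr_pos. Qed.

Lemma sum_ni : \sum_(i < n) ni = 1.
Proof. by rewrite sumr_const card_ord -[ni *+ n]mulr_natl nini. Qed.

Lemma sum_d : \sum_i d i = 0.
Proof. by rewrite /d sumrB HP1 sum_ni subrr. Qed.

Lemma mu_eq : muP P = ni + del.
Proof.
have -> : del = \sum_i (P i ^+ 2 + (- 2 * ni) * P i + ni * ni).
  by apply: eq_bigr => i _; rewrite /d; ring.
rewrite !big_split /= -mulr_sumr HP1 sumr_const card_ord /muP.
rewrite -[ni * ni *+ n]mulr_natl mulrA nini; ring.
Qed.

Lemma gamma_eq : gammaP P = ni * ni + 3 * ni * del + \sum_i d i ^+ 3.
Proof.
have -> : gammaP P = \sum_i (ni ^+ 3 + (3 * ni ^+ 2) * d i + (3 * ni) * d i ^+ 2 + d i ^+ 3).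
  by apply: eq_bigr => i _; rewrite /d; ring.
rewrite !big_split /= -!mulr_sumr sum_d sumr_const card_ord -/del.
rewrite -[ni *+ n]mulr_natl nini; ring.
Qed.

Lemma d_le i : `|d i| <= Num.sqrt del.
Proof.
rewrite -sqrtr_sqr; apply: ler_wsqrtr.
rewrite /del (bigD1 i) //= ler_wpDr // sumr_ge0 // => j _; exact: sqr_ge0.
Qed.

Lemma cube_le : \sum_i d i ^+ 3 <= Num.sqrt del * del.
Proof.
rewrite /del mulr_sumr; apply: ler_sum => i _.
have h := d_le i.
have h2 : d i <= Num.sqrt del by apply: le_trans (ler_norm _) h.
have h3 : 0 <= d i ^+ 2 by exact: sqr_ge0.
rewrite exprS; apply: ler_wpM2r => //.
Qed.

Lemma gamma_le : gammaP P - muP P ^+ 2 <= ni * del + Num.sqrt del * del.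
Proof.
rewrite gamma_eq mu_eq.
have := cube_le.
have : 0 <= del ^+ 2 by exact: sqr_ge0.
set C := \sum_i _; set s := Num.sqrt del; move=> h1 h2.
have -> : ni * ni + 3 * ni * del + C - (ni + del) ^+ 2 = ni * del + C - del ^+ 2 by ring.
lra.
Qed.

Lemma dist_le : dist_unif P ^+ 2 <= n%:R * del.
Proof.
set L := dist_unif P.
have h : 0 <= \sum_i (`|d i| - L * ni) ^+ 2 by apply: sumr_ge0 => i _; exact: sqr_ge0.
have e1 : \sum_i (`|d i| - L * ni) ^+ 2 = del - L ^+ 2 * ni.
  transitivity (\sum_i (d i ^+ 2 + (- 2 * L * ni) * `|d i| + L * L * (ni * ni))).
    by apply: eq_bigr => i _; rewrite -(real_normK (num_real (d i))); ring.
  rewrite !big_split /= -mulr_sumr sumr_const card_ord -/del.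
  have -> : \sum_i `|d i| = L by [].
  rewrite -[L * L * (ni * ni) *+ n]mulr_natl.
  have -> : n%:R * (L * L * (ni * ni)) = L * L * ni * (n%:R * ni) by ring.
  rewrite nini; ring.
rewrite e1 in h.
have h2 : n%:R * (del - L ^+ 2 * ni) = n%:R * del - L ^+ 2.
  have -> : n%:R * (del - L ^+ 2 * ni) = n%:R * del - L ^+ 2 * (n%:R * ni) by ring.
  by rewrite nini mulr1.
have := nr_pos; nra.
Qed.

End Moments.

Lemma final_arith (R : realType) (E c mu ga ni del eps tau nr r s : R) :
  1 <= E -> 0 < eps -> eps <= 1 -> 0 <= tau -> tau < 1 -> 1 <= nr -> nr * ni = 1 ->
  0 <= r -> r ^+ 2 = nr -> 0 <= s -> s ^+ 2 = del ->
  eps ^+ 2 <= nr * del -> mu = ni + del -> ga - mu ^+ 2 <= ni * del + s * del ->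
  E * (mu - mu ^+ 2) < c * (ga - mu ^+ 2) -> 0 <= c ->
  c <= E ^+ 2 * (1 - tau) ^+ 2 * eps ^+ 2 / (16 * r) ->
  0 < E * mu - E * (1 + tau * eps ^+ 2) * ni /\
  E * (mu - mu ^+ 2) + c * (ga - mu ^+ 2) <= (E * mu - E * (1 + tau * eps ^+ 2) * ni) ^+ 2 / 4.
Proof.
move=> E1 e0 e1 t0 t1 nr1 hni r0 hr s0 hs hed hmu hga hvar c0 hc.
have ni0 : 0 < ni by nra.
have hd1 : eps ^+ 2 * ni <= del.
  have : eps ^+ 2 * ni <= nr * del * ni by rewrite ler_pM2r.
  have -> : nr * del * ni = del * (nr * ni) by ring.
  by rewrite hni mulr1.
have e2 : 0 < eps ^+ 2 by rewrite exprn_gt0.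
have dpos : 0 < del by have := mulr_gt0 e2 ni0; lra.
have hmT : E * (1 - tau) * del <= E * mu - E * (1 + tau * eps ^+ 2) * ni.
  have hd2 : 0 <= del - eps ^+ 2 * ni by rewrite subr_ge0.
  have h := mulr_ge0 (mulr_ge0 (le_trans ler01 E1) t0) hd2.
  rewrite hmu; lra.
have X0 : 0 < E * (1 - tau) * del.
  by apply: mulr_gt0 => //; apply: mulr_gt0; lra.
split; first lra.
have hr1 : 1 <= r by nra.
have hers : eps <= r * s.
  rewrite leNgt; apply/negP => h.
  have h1 : 0 <= r * s by exact: mulr_ge0.
  have h2 : (r * s) ^+ 2 = nr * del by rewrite exprMn hr hs.
  nra.
have key : eps ^+ 2 * (ni + s) <= 2 * r * del.
  have h1 : del <= r * del by nra.
  have h2 : eps ^+ 2 * s <= eps * s.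
    have h0 : 0 <= 1 - eps by lra.
    have := mulr_ge0 (mulr_ge0 (ltW e0) s0) h0; rewrite expr2; lra.
  have h3 : eps * s <= r * s * s by nra.
  have h4 : s * s = del by rewrite -hs expr2.
  nra.
have r0' : 0 < r by lra.
set A := E ^+ 2 * (1 - tau) ^+ 2 * del / (16 * r).
have A0 : 0 <= A.
  rewrite /A; apply: divr_ge0; last by lra.
  by apply: mulr_ge0; [apply: mulr_ge0; apply: sqr_ge0 | lra].
have hK : c * (ni * del + s * del) <= A * (eps ^+ 2 * (ni + s)).
  have -> : A * (eps ^+ 2 * (ni + s)) = E ^+ 2 * (1 - tau) ^+ 2 * eps ^+ 2 / (16 * r) * (ni * del + s * del).
    rewrite /A; field; lra.
  apply: ler_wpM2r => //; nra.
have hK2 : A * (eps ^+ 2 * (ni + s)) <= (E * (1 - tau) * del) ^+ 2 / 8.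
  apply: le_trans (ler_wpM2l A0 key) _.
  rewrite /A le_eqVlt; apply/orP; left; apply/eqP; field; lra.
have hsq : (E * (1 - tau) * del) ^+ 2 <= (E * mu - E * (1 + tau * eps ^+ 2) * ni) ^+ 2.
  nra.
have hg : c * (ga - mu ^+ 2) <= c * (ni * del + s * del) by apply: ler_wpM2l.
lra.
Qed.

Theorem lemma11 (R : realType) (n : nat) (eps tau : R)
  (V : finType) (e : rel V) (P : {ffun 'I_n -> R}) :
  (0 < n)%N ->
  0 < eps -> eps <= 1 ->
  0 <= tau -> tau < 1 ->
  simple_graph e ->
  (1 <= #|edges e|)%N ->
  is_distr P ->
  eps <= dist_unif P ->
  #|edges e|%:R * (muP P - muP P ^+ 2) < (cG e)%:R * (gammaP P - muP P ^+ 2) ->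
  (cG e)%:R <= #|edges e|%:R ^+ 2 * (1 - tau) ^+ 2 * eps ^+ 2
                 / (16 * Num.sqrt n%:R) ->
  prob_yes e P tau eps <= 4^-1.
Proof.
move=> n0 eps0 eps1 tau0 tau1 [Hirr Hsym] E1 [HP0 HP1] Hdist Hvar Hc.
have hmu := mu_eq n0 HP1.
have hga := gamma_le n0 HP1.
have hdl := dist_le P n0.
have hni := nini R n0.
set E := (#|edges e|)%:R : R in Hvar Hc *.
set c := ((cG e)%:R : R) in Hvar Hc *.
set ni := (n%:R^-1 : R) in hmu hga hdl hni *.
set del := \sum_i (P i - ni) ^+ 2 in hmu hga hdl *.
have hed : eps ^+ 2 <= n%:R * del.
  apply: le_trans hdl; have := ltW eps0; nra.
set r := Num.sqrt (n%:R : R) in Hc.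
have hr : r ^+ 2 = n%:R by rewrite sqr_sqrtr // ler0n.
have r0 : 0 <= r by exact: sqrtr_ge0.
have del0 : 0 <= del by apply: sumr_ge0 => i _; exact: sqr_ge0.
set s := Num.sqrt del in hga.
have hs : s ^+ 2 = del by rewrite sqr_sqrtr.
have s0 : 0 <= s by exact: sqrtr_ge0.
have nr1 : (1 : R) <= n%:R by rewrite ler1n.
have E1r : (1 : R) <= E by rewrite ler1n.
have c0 : 0 <= c by exact: ler0n.
have hga' := hga.
have [hmT hV] := @final_arith R _ _ _ _ _ _ _ _ _ _ _ E1r eps0 eps1 tau0 tau1 nr1 hni r0 hr s0 hs hed hmu hga' Hvar c0 Hc.
set m := E * muP P in hmT hV.
have hEZ2 : Ex P (fun S => ((collisions e S)%:R - m) ^+ 2) =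
    E * (muP P - muP P ^+ 2) + c * (gammaP P - muP P ^+ 2).
  have hY : forall S : {ffun V -> 'I_n}, ((collisions e S)%:R : R) = Y R e S / 2.
    move=> S; rewrite /Y -(coll_Y R Hirr Hsym S); by field.
  transitivity (Ex P (fun S : {ffun V -> 'I_n} => 4^-1 * Y R e S ^+ 2 + ((- m) * Y R e S + m ^+ 2))).
    by apply: Ex_ext => S; rewrite hY; field.
  rewrite Ex_add Ex_add Ex_scale Ex_scale Ex_const //.
  have hEY : Ex P (fun S => Y R e S) = NN R e * muP P := EY HP1 Hirr.
  have hVar2 := Var_Y HP1 Hirr Hsym.
  have hY2 : Ex P (fun S => Y R e S ^+ 2) = (NN R e * muP P) ^+ 2 +
     (2 * NN R e * (muP P - muP P ^+ 2) + 4 * C3 R e * (gammaP P - muP P ^+ 2)).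
    by rewrite -hVar2; ring.
  have hNN : NN R e = 2 * E by rewrite /NN -(edges_N R Hirr Hsym) mulrC.
  have hC : C3 R e = c by rewrite /c (cG_C3 R Hirr).
  rewrite hY2 hEY hNN hC /m; by field.
have hT : threshold e n tau eps = E * (1 + tau * eps ^+ 2) * ni by [].
apply: (@le_trans _ _ (Ex P (fun S => ((collisions e S)%:R - m) ^+ 2) /
                       (m - threshold e n tau eps) ^+ 2)).
  rewrite /prob_yes /Ex mulr_suml big_mkcond /=; apply: ler_sum => S _.
  have w0 : 0 <= W P S by apply: prodr_ge0 => v _.
  rewrite hT; case: ifP => hS.
    have hq : 1 <= ((collisions e S)%:R - m) ^+ 2 / (m - E * (1 + tau * eps ^+ 2) * ni) ^+ 2.
      by rewrite ler_pdivlMr ?mul1r ?exprn_gt0 //; nra.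
    rewrite -mulrA; have := ler_wpM2l w0 hq; by rewrite mulr1.
  by rewrite -mulrA mulr_ge0 // divr_ge0 // sqr_ge0.
rewrite hEZ2 hT ler_pdivrMr ?exprn_gt0 //; lra.
Qed.
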